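(* Let $\mathbf p\in\mathbb{Z}^2\setminus\{\mathbf0\}$ and $\mathbf a\in\mathbb{Z}^2$ with $|\mathbf a|<|\mathbf p|$ and $|\mathbf a+k\mathbf p|>|\mathbf p|$ for all $k\in\mathbb{Z}\setminus\{0\}$, and set $\rho_k=\frac1{|\mathbf p|^2}-\frac1{|\mathbf a+k\mathbf p|^2}$ for $k\in\mathbb{Z}$. Suppose that $\sqrt{-\rho_1(\rho_0+\rho_2)}$ or $\sqrt{-\rho_{-1}(\rho_0+\rho_{-2})}$ is a positive real number. Then the infinite matrix $M=(M_{j,k})_{j,k\in\mathbb{Z}}$ with $M_{j,j+1}=\rho_{j+1}$, $M_{j,j-1}=-\rho_{j-1}$ and all other entries zero has a positive real eigenvalue $\lambda$, and an associated eigenvector lies in $\ell^2(\mathbb{Z})$; that is, there exist $\lambda>0$ and a nonzero real sequence $\mathbf v=(v_k)_{k\in\mathbb{Z}}\in\ell^2(\mathbb{Z})$ with $\lambda v_k=\rho_{k+1}v_{k+1}-\rho_{k-1}v_{k-1}$ for all $k\in\mathbb{Z}$.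
   Context: $M$ is (up to a scalar factor) the linearisation of the 2D Euler equations on the torus, written in Fourier coefficients $\omega_{\mathbf a+k\mathbf p}$, about the equilibrium with Fourier coefficients nonzero only at $\pm\mathbf p$, restricted to the invariant subspace of modes $\{\mathbf a+k\mathbf p:k\in\mathbb{Z}\}$. *)

(* Defs.v *)
From Stdlib Require Import Reals ZArith.
From Coquelicot Require Import Coquelicot.
Open Scope R_scope.

Definition sqnorm (x : Z * Z) : R := IZR (fst x) ^ 2 + IZR (snd x) ^ 2.

Definition affk (a p : Z * Z) (k : Z) : Z * Z :=
  (fst a + k * fst p, snd a + k * snd p)%Z.

Definition rho (a p : Z * Z) (k : Z) : R :=
  / sqnorm p - / sqnorm (affk a p k).

(* v in l^2(Z): sum over k in Z of v_k^2 is finite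
   (indexing Z by n >= 0 and -n-1 for n >= 0). *)
Definition in_l2Z (v : Z -> R) : Prop :=
  ex_series (fun n : nat => v (Z.of_nat n) ^ 2 + v (- Z.of_nat n - 1)%Z ^ 2).

(* Main.v *)
Require Import Defs.
From Stdlib Require Import Reals ZArith.
From Coquelicot Require Import Coquelicot.
From Stdlib Require Import Lra Lia Psatz.
Require Import Stdlib.Reals.Ranalysis5.
Open Scope R_scope.

Fixpoint cfr (t : nat -> R) (m n : nat) : R :=
  match m with O => 0 | S m' => / (t n + cfr t m' (S n)) end.

Definition Qd (t : nat -> R) (n : nat) : R := real (Lim_seq (fun m => cfr t m n)).

Definition isQ (t Q : nat -> R) : Prop :=
  forall n, 0 < Q n /\ Q n * (t n + Q (S n)) = 1.

Lemma le_inv_of_mul (z c : R) : 0 < c -> z * c <= 1 -> z <= / c.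
Proof.
  intros Hc H. apply Rmult_le_reg_r with c; auto.
  rewrite Rinv_l; lra.
Qed.

Lemma cfr_bounds t tau : 0 < tau -> (forall n, tau <= t n) ->
  forall m n, 0 <= cfr t m n <= / tau.
Proof.
  intros Ht Hb m. induction m as [|m IH]; intros n; simpl.
  - split; [lra|]. left; apply Rinv_0_lt_compat; auto.
  - destruct (IH (S n)) as [H1 H2]. specialize (Hb n).
    split.
    + left; apply Rinv_0_lt_compat; lra.
    + apply Rinv_le_contravar; lra.
Qed.

Lemma two_step a b x y tau : 0 < tau -> tau <= a -> tau <= b -> 0 <= x -> 0 <= y ->
  Rabs (/ (a + / (b + x)) - / (a + / (b + y))) <= / (1 + tau ^ 2) * Rabs (x - y).
Proof.
  intros Ht Ha Hb Hx Hy.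
  assert (E : / (a + / (b + x)) - / (a + / (b + y)) =
     (x - y) * / ((a * (b + x) + 1) * (a * (b + y) + 1))).
  { assert (/ (b+x) > 0) by (apply Rinv_0_lt_compat; lra).
    assert (/ (b+y) > 0) by (apply Rinv_0_lt_compat; lra).
    field. repeat split; try nra. }
  rewrite E, Rabs_mult, (Rmult_comm (/ (1 + tau ^ 2))).
  apply Rmult_le_compat_l; [apply Rabs_pos|].
  assert (HD1 : 0 < a * (b + x) + 1) by nra.
  assert (HD2 : 0 < a * (b + y) + 1) by nra.
  assert (HD : 0 < (a * (b + x) + 1) * (a * (b + y) + 1)) by (apply Rmult_lt_0_compat; auto).
  rewrite Rabs_right; [| left; apply Rinv_0_lt_compat; auto].
  apply Rinv_le_contravar; [nra|].
  assert (tau^2 <= a * b) by nra.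
  assert (H1 : 1 + a*b <= a * (b + x) + 1) by nra.
  assert (H2 : 1 + a*b <= a * (b + y) + 1) by nra.
  assert (H3 : (1 + a*b) * 1 <= (a * (b + x) + 1) * (a * (b + y) + 1)).
  { apply Rmult_le_compat; nra. }
  lra.
Qed.

Lemma cfr_cauchy t tau : 0 < tau -> (forall n, tau <= t n) ->
  forall j m m' n, (2 * j <= m)%nat -> (2 * j <= m')%nat ->
  Rabs (cfr t m n - cfr t m' n) <= (/ (1 + tau ^ 2)) ^ j * / tau.
Proof.
  intros Ht Hb j. induction j as [|j IH]; intros m m' n Hm Hm'.
  - simpl. rewrite Rmult_1_l.
    destruct (cfr_bounds t tau Ht Hb m n). destruct (cfr_bounds t tau Ht Hb m' n).
    apply Rabs_le; lra.
  - destruct m as [|[|m]]; [lia|lia|]. destruct m' as [|[|m']]; [lia|lia|].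
    simpl cfr.
    eapply Rle_trans.
    { apply two_step with (tau := tau); auto; apply (cfr_bounds t tau Ht Hb). }
    simpl pow. rewrite Rmult_assoc.
    apply Rmult_le_compat_l; [left; apply Rinv_0_lt_compat; nra|].
    apply IH; lia.
Qed.

Lemma cfr_ex_lim t tau : 0 < tau -> (forall n, tau <= t n) ->
  forall n, ex_finite_lim_seq (fun m => cfr t m n).
Proof.
  intros Ht Hb n. apply ex_lim_seq_cauchy_corr. intros eps.
  set (k := / (1 + tau ^ 2)).
  assert (Hk0 : 0 < k) by (apply Rinv_0_lt_compat; nra).
  assert (Hk1 : k < 1).
  { unfold k. rewrite <- Rinv_1. apply Rinv_lt_contravar; nra. }
  destruct (pow_lt_1_zero k ltac:(rewrite Rabs_right; lra) (eps * tau))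
    as [N HN].
  { destruct eps; simpl; nra. }
  exists (2 * N)%nat. intros a b Ha Hb'.
  eapply Rle_lt_trans. { apply (cfr_cauchy t tau Ht Hb N); lia. }
  specialize (HN N (le_n _)). rewrite Rabs_right in HN.
  2:{ left; apply pow_lt; auto. }
  fold k. apply Rmult_lt_reg_r with tau; auto.
  rewrite Rmult_assoc, Rinv_l; lra.
Qed.

Lemma Qd_isQ t tau : 0 < tau -> (forall n, tau <= t n) -> isQ t (Qd t).
Proof.
  intros Ht Hb.
  assert (L : forall n, is_lim_seq (fun m => cfr t m n) (Qd t n)).
  { intros n. unfold Qd. pose proof (Lim_seq_correct' _ (cfr_ex_lim t tau Ht Hb n)) as H.
    destruct (cfr_ex_lim t tau Ht Hb n) as [l Hl].
    rewrite (is_lim_seq_unique _ _ Hl) in *. simpl. exact Hl. }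
  intros n.
  assert (E : Qd t n * (t n + Qd t (S n)) = 1).
  { assert (H1 : is_lim_seq (fun m => cfr t (S m) n * (t n + cfr t m (S n)))
                   (Qd t n * (t n + Qd t (S n)))).
    { apply is_lim_seq_mult'.
      - apply (is_lim_seq_incr_1 (fun m => cfr t m n)). apply L.
      - apply is_lim_seq_plus'; [apply is_lim_seq_const| apply L]. }
    assert (H2 : is_lim_seq (fun m => cfr t (S m) n * (t n + cfr t m (S n))) 1).
    { apply is_lim_seq_ext with (fun _ => 1); [|apply is_lim_seq_const].
      intros m. simpl. rewrite Rinv_l; auto.
      destruct (cfr_bounds t tau Ht Hb m (S n)). specialize (Hb n). lra. }
    apply is_lim_seq_unique in H1. apply is_lim_seq_unique in H2.
    rewrite H1 in H2. injection H2; auto. }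
  split; auto.
  assert (0 <= Qd t n).
  { assert (H := is_lim_seq_le (fun _ => 0) _ 0 (Qd t n)
       (fun m => proj1 (cfr_bounds t tau Ht Hb m n)) (is_lim_seq_const 0) (L n)).
    simpl in H. auto. }
  destruct H; auto. rewrite <- H in E. lra.
Qed.

Lemma isQ_le t Q tau : 0 < tau -> (forall n, tau <= t n) -> isQ t Q ->
  forall n, Q n <= / tau.
Proof.
  intros Ht Hb HQ n. destruct (HQ n) as [H1 H2]. destruct (HQ (S n)) as [H3 _].
  apply le_inv_of_mul; auto. specialize (Hb n). nra.
Qed.

Lemma isQ_prod t Q tau : 0 < tau -> (forall n, tau <= t n) -> isQ t Q ->
  forall n, Q n * Q (S n) <= / (1 + tau ^ 2).
Proof.
  intros Ht Hb HQ n. destruct (HQ n) as [H1 H2]. destruct (HQ (S n)) as [H3 H4].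
  destruct (HQ (S (S n))) as [H5 _].
  pose proof (Hb n) as B0. pose proof (Hb (S n)) as B1.
  apply le_inv_of_mul; [nra|].
  assert (X : Q (S n) * t (S n) <= 1) by nra.
  assert (Y : Q n * Q (S n) * (t n * t (S n)) <= Q n * t n).
  { replace (Q n * Q (S n) * (t n * t (S n))) with ((Q n * t n) * (Q (S n) * t (S n))) by ring.
    assert (0 <= Q n * t n) by nra. nra. }
  assert (Z : tau ^ 2 <= t n * t (S n)) by nra.
  assert (W : Q n * Q (S n) * tau ^ 2 <= Q n * Q (S n) * (t n * t (S n))).
  { apply Rmult_le_compat_l; nra. }
  nra.
Qed.

Lemma lim_le x a b k : 0 <= k < 1 -> 0 <= b -> (forall j, x <= a + k ^ j * b) -> x <= a.
Proof.
  intros Hk Hb H. destruct (Rle_or_lt x a) as [|Hlt]; auto. exfalso.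
  destruct (pow_lt_1_zero k ltac:(rewrite Rabs_right; lra) ((x - a) / (b + 1)))
    as [N HN].
  { apply Rdiv_lt_0_compat; lra. }
  specialize (HN N (le_n _)). specialize (H N).
  rewrite Rabs_right in HN by (apply Rle_ge, pow_le; lra).
  assert (k ^ N * (b + 1) < x - a).
  { apply Rmult_lt_reg_r with (/ (b+1)). apply Rinv_0_lt_compat; lra.
    rewrite Rmult_assoc, Rinv_r by lra. lra. }
  assert (0 <= k ^ N) by (apply pow_le; lra). nra.
Qed.

Lemma isQ_lip t t' Q Q' tau eps : 0 < tau -> (forall n, tau <= t n) -> (forall n, tau <= t' n) ->
  (forall n, Rabs (t n - t' n) <= eps) -> isQ t Q -> isQ t' Q' ->
  forall n, Rabs (Q n - Q' n) <= ((/ tau) ^ 2 + 1) * eps / (1 - / (1 + tau ^ 2)).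
Proof.
  intros Ht Hb Hb' He HQ HQ'.
  set (k := / (1 + tau ^ 2)).
  assert (Hk0 : 0 < k) by (apply Rinv_0_lt_compat; nra).
  assert (Hk1 : k < 1).
  { unfold k. rewrite <- Rinv_1. apply Rinv_lt_contravar; nra. }
  set (B := / tau).
  assert (HB : 0 < B) by (apply Rinv_0_lt_compat; auto).
  set (K := (B ^ 2 + 1) * eps).
  assert (He0 : 0 <= eps) by (specialize (He O); pose proof (Rabs_pos (t O - t' O)); lra).
  assert (Step1 : forall n, Rabs (Q n - Q' n) <= Q n * Q' n * (eps + Rabs (Q (S n) - Q' (S n)))).
  { intros n. destruct (HQ n) as [A1 A2]. destruct (HQ' n) as [A3 A4].
    assert (E : Q n - Q' n = Q n * Q' n * ((t' n - t n) + (Q' (S n) - Q (S n)))).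
    { transitivity (Q n * (Q' n * (t' n + Q' (S n))) - Q' n * (Q n * (t n + Q (S n)))).
      - rewrite A2, A4. ring.
      - ring. }
    rewrite E, Rabs_mult, (Rabs_right (Q n * Q' n)) by nra.
    apply Rmult_le_compat_l; [nra|].
    eapply Rle_trans; [apply Rabs_triang|].
    rewrite Rabs_minus_sym, (Rabs_minus_sym (Q' (S n))). specialize (He n). lra. }
  assert (Step2 : forall n, Rabs (Q n - Q' n) <= K + k * Rabs (Q (S (S n)) - Q' (S (S n)))).
  { intros n. pose proof (Step1 n) as S1. pose proof (Step1 (S n)) as S2.
    pose proof (isQ_le t Q tau Ht Hb HQ n) as L1.
    pose proof (isQ_le t' Q' tau Ht Hb' HQ' n) as L2.
    pose proof (isQ_prod t Q tau Ht Hb HQ n) as P1.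
    pose proof (isQ_prod t' Q' tau Ht Hb' HQ' n) as P2.
    fold k B in L1, L2, P1, P2.
    destruct (HQ n) as [A1 _]. destruct (HQ' n) as [A3 _].
    destruct (HQ (S n)) as [A5 _]. destruct (HQ' (S n)) as [A6 _].
    set (d1 := Rabs (Q (S n) - Q' (S n))) in *.
    set (d2 := Rabs (Q (S (S n)) - Q' (S (S n)))) in *.
    assert (0 <= d2) by apply Rabs_pos.
    assert (C1 : Q n * Q' n <= B ^ 2) by nra.
    assert (C2 : Q n * Q' n * (Q (S n) * Q' (S n)) <= k).
    { replace (Q n * Q' n * (Q (S n) * Q' (S n))) with ((Q n * Q (S n)) * (Q' n * Q' (S n))) by ring.
      assert (k * k <= k) by nra.
      assert ((Q n * Q (S n)) * (Q' n * Q' (S n)) <= k * k).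
      { apply Rmult_le_compat; nra. }
      lra. }
    assert (C3 : Q n * Q' n * d1 <= Q n * Q' n * (Q (S n) * Q' (S n) * (eps + d2))).
    { apply Rmult_le_compat_l; nra. }
    unfold K.
    assert (Q n * Q' n * eps <= B^2 * eps) by nra.
    assert (Q n * Q' n * (Q (S n) * Q' (S n)) * (eps + d2) <= k * (eps + d2)) by nra.
    nra. }
  assert (Iter : forall j n, Rabs (Q n - Q' n) <= K / (1 - k) + k ^ j * (2 * B)).
  { intros j. induction j as [|j IH]; intros n.
    - simpl. pose proof (isQ_le t Q tau Ht Hb HQ n) as M1. pose proof (isQ_le t' Q' tau Ht Hb' HQ' n) as M2.
      destruct (HQ n). destruct (HQ' n). fold B in M1, M2.
      assert (0 <= K / (1 - k)).
      { unfold K. apply Rdiv_le_0_compat; [|lra]. apply Rmult_le_pos; nra. }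
      apply Rabs_le; lra.
    - eapply Rle_trans; [apply Step2|].
      specialize (IH (S (S n))).
      assert (E : K / (1 - k) = K + k * (K / (1 - k))) by (field; lra).
      simpl pow. rewrite E. nra. }
  intros n. apply (lim_le _ _ (2 * B) k); [lra|lra|].
  intros j. specialize (Iter j n). unfold K, B in Iter. exact Iter.
Qed.

Definition tl (r : nat -> R) (l : R) : nat -> R := fun n => l / r n.

Lemma tl_ge r s R0 l : 0 < s -> (forall n, s <= r n <= R0) -> 0 <= l ->
  forall n, l / R0 <= tl r l n.
Proof.
  intros Hs Hr Hl n. unfold tl. specialize (Hr n). unfold Rdiv.
  apply Rmult_le_compat_l; auto. apply Rinv_le_contravar; lra.
Qed.

Lemma Ql_isQ r s R0 l : 0 < s -> (forall n, s <= r n <= R0) -> 0 < l ->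
  isQ (tl r l) (Qd (tl r l)).
Proof.
  intros Hs Hr Hl. assert (HR : 0 < R0) by (specialize (Hr O); lra).
  apply Qd_isQ with (l / R0).
  - apply Rdiv_lt_0_compat; auto.
  - apply (tl_ge r s); auto; lra.
Qed.

Lemma Ql_lip r s R0 l : 0 < s -> (forall n, s <= r n <= R0) -> 0 < l ->
  exists C, forall y, Rabs (y - l) < l / 2 ->
    Rabs (Qd (tl r y) O - Qd (tl r l) O) <= C * Rabs (y - l).
Proof.
  intros Hs Hr Hl. assert (HR : 0 < R0) by (specialize (Hr O); lra).
  set (tau := (l / 2) / R0).
  assert (Ht : 0 < tau) by (unfold tau; apply Rdiv_lt_0_compat; lra).
  set (k := / (1 + tau ^ 2)).
  assert (Hk1 : k < 1).
  { unfold k. rewrite <- Rinv_1. apply Rinv_lt_contravar; nra. }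
  exists (((/ tau) ^ 2 + 1) / s / (1 - k)).
  intros y Hy.
  assert (Hy0 : l / 2 < y) by (apply Rabs_def2 in Hy; lra).
  assert (G : forall z, l / 2 <= z -> forall n, tau <= tl r z n).
  { intros z Hz n. eapply Rle_trans; [| apply (tl_ge r s R0 z); auto; lra].
    unfold tau, Rdiv. apply Rmult_le_compat_r; auto. left; apply Rinv_0_lt_compat; auto. }
  eapply Rle_trans.
  { apply (isQ_lip (tl r y) (tl r l) _ _ tau (Rabs (y - l) / s)); auto.
    - apply G; lra.
    - apply G; lra.
    - intros n. unfold tl. specialize (Hr n).
      replace (y / r n - l / r n) with ((y - l) * / r n) by (field; lra).
      rewrite Rabs_mult, (Rabs_right (/ r n)) by (left; apply Rinv_0_lt_compat; lra).
      unfold Rdiv. apply Rmult_le_compat_l; [apply Rabs_pos|].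
      apply Rinv_le_contravar; lra.
    - apply Qd_isQ with tau; auto. apply G; lra.
    - apply Qd_isQ with tau; auto. apply G; lra. }
  fold k. right. field. split; lra.
Qed.

Lemma loclip_cont f x d C : 0 < d ->
  (forall y, Rabs (y - x) < d -> Rabs (f y - f x) <= C * Rabs (y - x)) ->
  continuity_pt f x.
Proof.
  intros Hd H. unfold continuity_pt, continue_in, limit1_in, limit_in.
  intros eps Heps. simpl. unfold R_dist.
  exists (Rmin d (eps / (Rabs C + 1))). split.
  { apply Rmin_pos; auto. apply Rdiv_lt_0_compat; auto. pose proof (Rabs_pos C); lra. }
  intros y [_ Hy].
  assert (H1 : Rabs (y - x) < d) by (eapply Rlt_le_trans; [exact Hy| apply Rmin_l]).
  assert (H2 : Rabs (y - x) < eps / (Rabs C + 1)) by (eapply Rlt_le_trans; [exact Hy| apply Rmin_r]).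
  eapply Rle_lt_trans; [apply H; auto|].
  pose proof (Rabs_pos (y - x)). pose proof (Rabs_pos C).
  assert (C <= Rabs C) by apply Rle_abs.
  assert (Rabs (y - x) * (Rabs C + 1) < eps).
  { apply Rmult_lt_reg_r with (/ (Rabs C + 1)). apply Rinv_0_lt_compat; lra.
    rewrite Rmult_assoc, Rinv_r by lra. lra. }
  nra.
Qed.

Fixpoint Useq (c : R) (Q : nat -> R) (n : nat) : R :=
  match n with O => 1 | S m => c * Q m * Useq c Q m end.

Lemma UR_rec t Q n : isQ t Q ->
  Useq (-1) Q (S (S n)) - Useq (-1) Q n = t n * Useq (-1) Q (S n).
Proof.
  intros HQ. destruct (HQ n) as [_ H]. simpl.
  set (U := Useq (-1) Q n).
  assert (U * (Q n * (t n + Q (S n))) = U * 1) by (rewrite H; ring).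
  lra.
Qed.

Lemma UL_rec t Q n : isQ t Q ->
  Useq 1 Q n - Useq 1 Q (S (S n)) = t n * Useq 1 Q (S n).
Proof.
  intros HQ. destruct (HQ n) as [_ H]. simpl.
  set (U := Useq 1 Q n).
  assert (U * (Q n * (t n + Q (S n))) = U * 1) by (rewrite H; ring).
  lra.
Qed.

Lemma U_decay c t Q tau : c * c = 1 -> 0 < tau -> (forall n, tau <= t n) -> isQ t Q ->
  forall n, Useq c Q (S (S n)) ^ 2 <= / (1 + tau ^ 2) * Useq c Q n ^ 2.
Proof.
  intros Hc Ht Hb HQ n.
  pose proof (isQ_prod t Q tau Ht Hb HQ n) as P.
  set (k := / (1 + tau ^ 2)) in *.
  assert (Hk0 : 0 < k) by (apply Rinv_0_lt_compat; nra).
  assert (Hk1 : k < 1).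
  { unfold k. rewrite <- Rinv_1. apply Rinv_lt_contravar; nra. }
  destruct (HQ n) as [A _]. destruct (HQ (S n)) as [B _].
  change (Useq c Q (S (S n))) with (c * Q (S n) * (c * Q n * Useq c Q n)).
  set (U := Useq c Q n).
  replace ((c * Q (S n) * (c * Q n * U)) ^ 2) with ((c*c)^2 * (Q n * Q (S n)) ^ 2 * U ^ 2) by ring.
  rewrite Hc.
  assert (Hx : 0 < Q n * Q (S n)) by (apply Rmult_lt_0_compat; auto).
  set (x := Q n * Q (S n)) in *.
  assert (x ^ 2 <= k) by nra.
  assert (0 <= U ^ 2) by nra.
  nra.
Qed.

Lemma geom2 (w : nat -> R) k : (forall n, 0 <= w n) -> 0 <= k < 1 ->
  (forall n, w (S (S n)) <= k * w n) -> ex_series w.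
Proof.
  intros Hw Hk H.
  set (mu := (1 + k) / 2).
  assert (Hmu : 0 < mu < 1) by (unfold mu; lra).
  set (C := w O + w 1%nat / mu).
  assert (HC : forall n, w n <= C * mu ^ n /\ w (S n) <= C * mu ^ (S n)).
  { induction n as [|n [IH1 IH2]].
    - simpl. unfold C. pose proof (Hw O). pose proof (Hw 1%nat).
      assert (0 <= w 1%nat / mu) by (apply Rdiv_le_0_compat; lra).
      split; [lra|].
      replace ((w O + w 1%nat / mu) * (mu * 1)) with (w O * mu + w 1%nat) by (field; lra).
      nra.
    - split; auto.
      eapply Rle_trans; [apply H|].
      assert (k <= mu * mu) by (unfold mu; nra).
      assert (0 <= C * mu ^ n).
      { eapply Rle_trans; [apply Hw| apply IH1]. }
      simpl. nra. }
  apply (ex_series_le w (fun n => C * mu ^ n)).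
  - intros n. change (norm (w n)) with (Rabs (w n)).
    rewrite Rabs_right by (apply Rle_ge, Hw). apply HC.
  - apply (ex_series_scal_l C (fun n => mu ^ n)). apply ex_series_geom.
    rewrite Rabs_right; lra.
Qed.

Lemma Q0_small r Q l rho0 : isQ (tl r l) Q -> 0 < r O -> 0 < r 1%nat -> 0 < l -> rho0 < 0 ->
  l ^ 2 <= - r O * (rho0 + r 1%nat) -> - (l / rho0) <= Q O.
Proof.
  intros HQ H0 H1 Hl Hr Hc.
  destruct (HQ O) as [A0 E0]. destruct (HQ 1%nat) as [A1 E1]. destruct (HQ 2%nat) as [A2 _].
  unfold tl in E0, E1.
  assert (F1 : Q 1%nat * l = r 1%nat * (1 - Q 1%nat * Q 2%nat)).
  { rewrite <- E1. field. lra. }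
  assert (P12 : 0 < Q 1%nat * Q 2%nat) by (apply Rmult_lt_0_compat; auto).
  assert (G1 : Q 1%nat * l <= r 1%nat).
  { rewrite F1. assert (r 1%nat * (Q 1%nat * Q 2%nat) > 0) by (apply Rmult_lt_0_compat; auto). lra. }
  assert (F0 : Q O * (l + r O * Q 1%nat) = r O).
  { transitivity (r O * (Q O * (l / r O + Q 1%nat))); [field; lra| rewrite E0; ring]. }
  assert (K : l * (l + r O * Q 1%nat) <= (- rho0 * Q O) * (l + r O * Q 1%nat)).
  { replace ((- rho0 * Q O) * (l + r O * Q 1%nat)) with (- rho0 * (Q O * (l + r O * Q 1%nat))) by ring.
    rewrite F0. nra. }
  assert (K2 : l <= - rho0 * Q O).
  { apply Rmult_le_reg_r with (l + r O * Q 1%nat); [nra|exact K]. }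
  replace (- (l / rho0)) with (l * / (- rho0)) by (field; lra).
  apply Rmult_le_reg_r with (- rho0); [lra|].
  rewrite Rmult_assoc, Rinv_l by lra. lra.
Qed.

Lemma Q0_large r Q l : isQ (tl r l) Q -> 0 < r O -> 0 < l -> Q O <= r O / l.
Proof.
  intros HQ H0 Hl. destruct (HQ O) as [A0 E0]. destruct (HQ 1%nat) as [A1 _].
  unfold tl in E0.
  assert (F0 : Q O * l = r O * (1 - Q O * Q 1%nat)).
  { rewrite <- E0. field. lra. }
  apply Rmult_le_reg_r with l; auto. unfold Rdiv. rewrite Rmult_assoc, Rinv_l by lra.
  assert (r O * (Q O * Q 1%nat) > 0) by (apply Rmult_lt_0_compat; auto; apply Rmult_lt_0_compat; auto). lra.
Qed.

Lemma sqnorm_IZR x : sqnorm x = IZR (fst x * fst x + snd x * snd x).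
Proof. unfold sqnorm. rewrite plus_IZR, !mult_IZR. ring. Qed.

Lemma sqnorm_nonneg x : 0 <= sqnorm x.
Proof. unfold sqnorm. nra. Qed.

Definition rR a p n := rho a p (Z.of_nat (S n)).
Definition rL a p n := rho a p (- Z.of_nat n - 1).
Definition Fl a p l := Qd (tl (rR a p) l) O + Qd (tl (rL a p) l) O + l / rho a p 0.
Definition uu a p l (k : Z) :=
  if Z.leb 0 k then Useq (-1) (Qd (tl (rR a p) l)) (Z.to_nat k)
  else Useq 1 (Qd (tl (rL a p) l)) (Z.to_nat (- k)).

Lemma uu_pos a p l n : uu a p l (Z.of_nat n) = Useq (-1) (Qd (tl (rR a p) l)) n.
Proof.
  unfold uu. replace (Z.leb 0 (Z.of_nat n)) with true by (symmetry; apply Z.leb_le; lia).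
  rewrite Nat2Z.id. auto.
Qed.

Lemma uu_neg a p l n : uu a p l (- Z.of_nat n - 1) = Useq 1 (Qd (tl (rL a p) l)) (S n).
Proof.
  unfold uu. replace (Z.leb 0 (- Z.of_nat n - 1)) with false by (symmetry; apply Z.leb_gt; lia).
  f_equal. lia.
Qed.

Lemma P_pos (p : Z * Z) : p <> (0%Z, 0%Z) -> 0 < sqnorm p.
Proof.
  intros Hp. destruct (Rle_lt_or_eq_dec 0 (sqnorm p) (sqnorm_nonneg p)) as [|E]; auto.
  exfalso. rewrite sqnorm_IZR in E. apply eq_IZR in E. destruct p as [x y]. simpl in E.
  apply Hp. f_equal; nia.
Qed.

Lemma rho_bnd a p k : p <> (0%Z, 0%Z) ->
  (forall k : Z, k <> 0%Z -> sqnorm (affk a p k) > sqnorm p) -> k <> 0%Z ->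
  / sqnorm p - / (sqnorm p + 1) <= rho a p k <= / sqnorm p.
Proof.
  intros Hp Hk Hk0. pose proof (P_pos p Hp) as HP. specialize (Hk k Hk0).
  assert (HN : sqnorm p + 1 <= sqnorm (affk a p k)).
  { rewrite !sqnorm_IZR in *. apply lt_IZR in Hk. rewrite <- plus_IZR. apply IZR_le. lia. }
  unfold rho. split.
  - assert (/ sqnorm (affk a p k) <= / (sqnorm p + 1)) by (apply Rinv_le_contravar; lra). lra.
  - assert (0 < / sqnorm (affk a p k)) by (apply Rinv_0_lt_compat; lra). lra.
Qed.

Lemma s_pos P : 0 < P -> 0 < / P - / (P + 1).
Proof. intros HP. assert (/ (P + 1) < / P) by (apply Rinv_lt_contravar; nra). lra. Qed.

Lemma rR_bnd a p : p <> (0%Z, 0%Z) ->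
  (forall k : Z, k <> 0%Z -> sqnorm (affk a p k) > sqnorm p) ->
  forall n, / sqnorm p - / (sqnorm p + 1) <= rR a p n <= / sqnorm p.
Proof. intros Hp Hk n. apply rho_bnd; auto. lia. Qed.

Lemma rL_bnd a p : p <> (0%Z, 0%Z) ->
  (forall k : Z, k <> 0%Z -> sqnorm (affk a p k) > sqnorm p) ->
  forall n, / sqnorm p - / (sqnorm p + 1) <= rL a p n <= / sqnorm p.
Proof. intros Hp Hk n. apply rho_bnd; auto. lia. Qed.

Lemma a_pos a p : p <> (0%Z, 0%Z) ->
  (- rho a p 1%Z * (rho a p 0%Z + rho a p 2%Z) > 0 \/
   - rho a p (-1)%Z * (rho a p 0%Z + rho a p (-2)%Z) > 0) -> 0 < sqnorm a.
Proof.
  intros Hp Hc. destruct (Rle_lt_or_eq_dec 0 (sqnorm a) (sqnorm_nonneg a)) as [|E]; auto.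
  exfalso. rewrite sqnorm_IZR in E. apply eq_IZR in E. destruct a as [x y]. simpl in E.
  assert (x = 0%Z) by nia. assert (y = 0%Z) by nia. subst.
  assert (R1 : rho (0%Z, 0%Z) p 1 = 0).
  { unfold rho. replace (sqnorm (affk (0%Z, 0%Z) p 1)) with (sqnorm p). ring.
    rewrite !sqnorm_IZR. f_equal. destruct p; unfold affk; cbn [fst snd]; ring. }
  assert (R2 : rho (0%Z, 0%Z) p (-1) = 0).
  { unfold rho. replace (sqnorm (affk (0%Z, 0%Z) p (-1))) with (sqnorm p). ring.
    rewrite !sqnorm_IZR. f_equal. destruct p; unfold affk; cbn [fst snd]; ring. }
  rewrite R1, R2 in Hc. lra.
Qed.

Lemma rho0_neg a p : p <> (0%Z, 0%Z) -> sqnorm a < sqnorm p -> 0 < sqnorm a -> rho a p 0 < 0.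
Proof.
  intros Hp Ha Ha0. unfold rho.
  replace (affk a p 0) with a by (destruct a; unfold affk; simpl; f_equal; ring).
  assert (/ sqnorm p < / sqnorm a) by (apply Rinv_lt_contravar; nra). lra.
Qed.

Lemma uu_negz a p l m : uu a p l (- Z.of_nat m) = Useq 1 (Qd (tl (rL a p) l)) m.
Proof.
  destruct m as [|m].
  - reflexivity.
  - replace (- Z.of_nat (S m))%Z with (- Z.of_nat m - 1)%Z by lia. apply uu_neg.
Qed.

Theorem lemma5 (p a : (Z * Z)%type) :
  p <> (0%Z, 0%Z) ->
  sqnorm a < sqnorm p ->
  (forall k : Z, k <> 0%Z -> sqnorm (affk a p k) > sqnorm p) ->
  (- rho a p 1%Z * (rho a p 0%Z + rho a p 2%Z) > 0 \/
   - rho a p (-1)%Z * (rho a p 0%Z + rho a p (-2)%Z) > 0) ->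
  exists (lambda : R) (v : Z -> R),
    lambda > 0 /\ (exists k : Z, v k <> 0) /\ in_l2Z v /\
    forall k : Z,
      lambda * v k = rho a p (k + 1)%Z * v (k + 1)%Z - rho a p (k - 1)%Z * v (k - 1)%Z.
Proof.
  intros Hp Ha Hk Hc.
  pose proof (P_pos p Hp) as HP.
  pose proof (s_pos _ HP) as Hs.
  set (s := / sqnorm p - / (sqnorm p + 1)) in *.
  set (R0 := / sqnorm p).
  pose proof (rR_bnd a p Hp Hk) as HrR. pose proof (rL_bnd a p Hp Hk) as HrL.
  fold s R0 in HrR, HrL.
  pose proof (a_pos a p Hp Hc) as Ha0.
  pose proof (rho0_neg a p Hp Ha Ha0) as Hr0.
  set (r0 := rho a p 0) in *.
  assert (QR : forall l, 0 < l -> isQ (tl (rR a p) l) (Qd (tl (rR a p) l)))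
    by (intros; apply Ql_isQ with s R0; auto).
  assert (QL : forall l, 0 < l -> isQ (tl (rL a p) l) (Qd (tl (rL a p) l)))
    by (intros; apply Ql_isQ with s R0; auto).
  assert (Hnz : forall j, rho a p j <> 0).
  { intros j. destruct (Z.eq_dec j 0) as [->|Hj]; [fold r0; lra|].
    pose proof (rho_bnd a p j Hp Hk Hj). fold s in H. lra. }
  assert (L0 : exists l0, 0 < l0 /\ Fl a p l0 > 0).
  { destruct Hc as [Hc|Hc].
    - set (D := - rho a p 1 * (r0 + rho a p 2)) in *.
      exists (Rmin 1 D).
      assert (H1 : 0 < Rmin 1 D) by (apply Rmin_pos; lra).
      assert (H2 : Rmin 1 D <= 1) by apply Rmin_l.
      assert (H3 : Rmin 1 D <= D) by apply Rmin_r.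
      split; auto.
      pose proof (Q0_small (rR a p) _ (Rmin 1 D) r0 (QR _ H1)) as HS.
      pose proof (HrR O). pose proof (HrR 1%nat).
      assert (S' : - (Rmin 1 D / r0) <= Qd (tl (rR a p) (Rmin 1 D)) O).
      { apply HS; try lra. assert (HH : Rmin 1 D ^ 2 <= D).
        { assert (Rmin 1 D * Rmin 1 D <= Rmin 1 D * 1) by (apply Rmult_le_compat_l; lra).
          simpl. lra. }
        exact HH. }
      destruct (QL _ H1 O). unfold Fl. fold r0. lra.
    - set (D := - rho a p (-1) * (r0 + rho a p (-2))) in *.
      exists (Rmin 1 D).
      assert (H1 : 0 < Rmin 1 D) by (apply Rmin_pos; lra).
      assert (H2 : Rmin 1 D <= 1) by apply Rmin_l.
      assert (H3 : Rmin 1 D <= D) by apply Rmin_r.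
      split; auto.
      pose proof (Q0_small (rL a p) _ (Rmin 1 D) r0 (QL _ H1)) as HS.
      pose proof (HrL O). pose proof (HrL 1%nat).
      assert (S' : - (Rmin 1 D / r0) <= Qd (tl (rL a p) (Rmin 1 D)) O).
      { apply HS; try lra. assert (HH : Rmin 1 D ^ 2 <= D).
        { assert (Rmin 1 D * Rmin 1 D <= Rmin 1 D * 1) by (apply Rmult_le_compat_l; lra).
          simpl. lra. }
        exact HH. }
      destruct (QR _ H1 O). unfold Fl. fold r0. lra. }
  destruct L0 as [l0 [Hl0 HF0]].
  set (X := rR a p O + rL a p O).
  assert (HX : 0 < X) by (unfold X; pose proof (HrR O); pose proof (HrL O); lra).
  set (l1 := 1 + l0 + (- r0) * X).
  assert (Hl1 : l0 < l1) by (unfold l1; nra).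
  assert (HF1 : Fl a p l1 < 0).
  { assert (Hl1p : 0 < l1) by lra.
    pose proof (Q0_large (rR a p) _ l1 (QR _ Hl1p) ltac:(pose proof (HrR O); lra) Hl1p).
    pose proof (Q0_large (rL a p) _ l1 (QL _ Hl1p) ltac:(pose proof (HrL O); lra) Hl1p).
    assert (E : rR a p O / l1 + rL a p O / l1 + l1 / r0 = (X * (- r0) - l1 * l1) * / (l1 * (- r0))).
    { unfold X. field. lra. }
    assert (N1 : X * (- r0) - l1 * l1 < 0) by (unfold l1 in *; nra).
    assert (N2 : 0 < / (l1 * (- r0))) by (apply Rinv_0_lt_compat; nra).
    unfold Fl. fold r0. nra. }
  assert (Cont : forall x, l0 <= x <= l1 -> continuity_pt (fun l => - Fl a p l) x).
  { intros x Hx. assert (Hx0 : 0 < x) by lra.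
    destruct (Ql_lip (rR a p) s R0 x Hs HrR Hx0) as [C1 HC1].
    destruct (Ql_lip (rL a p) s R0 x Hs HrL Hx0) as [C2 HC2].
    apply loclip_cont with (x / 2) (C1 + C2 + Rabs (/ r0)); [lra|].
    intros y Hy. specialize (HC1 y Hy). specialize (HC2 y Hy).
    unfold Fl. fold r0.
    replace (- (Qd (tl (rR a p) y) 0 + Qd (tl (rL a p) y) 0 + y / r0) -
             - (Qd (tl (rR a p) x) 0 + Qd (tl (rL a p) x) 0 + x / r0))
      with (- ((Qd (tl (rR a p) y) 0 - Qd (tl (rR a p) x) 0) +
               (Qd (tl (rL a p) y) 0 - Qd (tl (rL a p) x) 0) + (y - x) * / r0))
      by (field; lra).
    rewrite Rabs_Ropp.
    eapply Rle_trans; [apply Rabs_triang|].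
    eapply Rle_trans; [apply Rplus_le_compat_r, Rabs_triang|].
    rewrite Rabs_mult. pose proof (Rabs_pos (y - x)). lra. }
  destruct (IVT_interv (fun l => - Fl a p l) l0 l1 Cont Hl1 ltac:(lra) ltac:(lra))
    as [z [Hz HFz]].
  assert (Hz0 : 0 < z) by lra.
  exists z, (fun k => / rho a p k * uu a p z k).
  split; [lra|]. split.
  { exists 0%Z. fold r0. unfold uu. simpl. rewrite Rmult_1_r.
    apply Rinv_neq_0_compat. lra. }
  split.
  -
    unfold in_l2Z.
    set (M := (/ s) ^ 2 + (/ r0) ^ 2).
    assert (HM : forall j, (/ rho a p j) ^ 2 <= M).
    { intros j. unfold M. destruct (Z.eq_dec j 0) as [->|Hj].
      - fold r0. pose proof (pow2_ge_0 (/ s)). lra.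
      - pose proof (rho_bnd a p j Hp Hk Hj) as B. fold s in B.
        assert (/ rho a p j <= / s) by (apply Rinv_le_contravar; lra).
        assert (0 < / rho a p j) by (apply Rinv_0_lt_compat; lra).
        pose proof (pow2_ge_0 (/ r0)). nra. }
    set (QRz := Qd (tl (rR a p) z)). set (QLz := Qd (tl (rL a p) z)).
    set (w := fun n => Useq (-1) QRz n ^ 2 + Useq 1 QLz (S n) ^ 2).
    assert (HR0 : 0 < R0) by (pose proof (HrR O); lra).
    set (tau := z / R0).
    assert (Ht : 0 < tau) by (apply Rdiv_lt_0_compat; auto).
    assert (Hw : ex_series w).
    { apply geom2 with (/ (1 + tau ^ 2)).
      - intros n. unfold w. pose proof (pow2_ge_0 (Useq (-1) QRz n)).
        pose proof (pow2_ge_0 (Useq 1 QLz (S n))). lra.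
      - split. left; apply Rinv_0_lt_compat; nra.
        rewrite <- Rinv_1. apply Rinv_lt_contravar; nra.
      - intros n. unfold w.
        pose proof (U_decay (-1) _ QRz tau ltac:(ring) Ht (tl_ge (rR a p) s R0 z Hs HrR ltac:(lra)) (QR z Hz0) n).
        pose proof (U_decay 1 _ QLz tau ltac:(ring) Ht (tl_ge (rL a p) s R0 z Hs HrL ltac:(lra)) (QL z Hz0) (S n)).
        lra. }
    apply (@ex_series_le R_AbsRing R_CompleteNormedModule _ (fun n => M * w n)).
    + intros n. change (norm ?x) with (Rabs x).
      rewrite (uu_pos a p z n), (uu_neg a p z n). fold QRz QLz.
      rewrite Rabs_right.
      2:{ apply Rle_ge. apply Rplus_le_le_0_compat; apply pow2_ge_0. }
      unfold w.
      rewrite !Rpow_mult_distr.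
      pose proof (HM (Z.of_nat n)). pose proof (HM (- Z.of_nat n - 1)%Z).
      pose proof (pow2_ge_0 (Useq (-1) QRz n)). pose proof (pow2_ge_0 (Useq 1 QLz (S n))).
      nra.
    + apply (ex_series_scal_l M w). exact Hw.
  -
    assert (Rec : forall k, uu a p z (k + 1) - uu a p z (k - 1) = z / rho a p k * uu a p z k).
    { intros k. destruct (Z_lt_le_dec k 0) as [Hk0|Hk0].
      - set (m := Z.to_nat (- k - 1)).
        assert (Ek : k = (- Z.of_nat m - 1)%Z) by (unfold m; rewrite Z2Nat.id; lia).
        replace (k + 1)%Z with (- Z.of_nat m)%Z by lia.
        replace (k - 1)%Z with (- Z.of_nat (S m) - 1)%Z by lia.
        rewrite Ek, uu_negz, !uu_neg.
        pose proof (UL_rec _ _ m (QL z Hz0)) as R. unfold tl in R. unfold rL in R. exact R.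
      - set (n := Z.to_nat k).
        assert (Ek : k = Z.of_nat n) by (unfold n; rewrite Z2Nat.id; lia).
        destruct n as [|m].
        + simpl in Ek. subst k.
          change (0 + 1)%Z with (Z.of_nat 1). change (0 - 1)%Z with (- Z.of_nat 0 - 1)%Z.
          rewrite uu_pos, uu_neg. fold r0. unfold uu. simpl.
          unfold Fl in HFz. fold r0 in HFz. lra.
        + replace (k + 1)%Z with (Z.of_nat (S (S m))) by lia.
          replace (k - 1)%Z with (Z.of_nat m) by lia.
          rewrite Ek, !uu_pos.
          pose proof (UR_rec _ _ m (QR z Hz0)) as R. unfold tl in R. unfold rR in R. exact R. }
    intros k.
    replace (rho a p (k + 1) * (/ rho a p (k + 1) * uu a p z (k + 1))) with (uu a p z (k + 1))
      by (field; apply Hnz).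
    replace (rho a p (k - 1) * (/ rho a p (k - 1) * uu a p z (k - 1))) with (uu a p z (k - 1))
      by (field; apply Hnz).
    rewrite Rec. unfold Rdiv. ring.
Qed.
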